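(* For $n\ge 1$, the friendship graph $F_n$ satisfies $\nu^*(F_n)=17n^2+n$.
   Context: For a finite simple graph $G=(V,E)$ with $\ell=|V|+|E|$, a construction sequence (c-sequence) is a bijection $x:\{1,\dots,\ell\}\to V\sqcup E$ such that every edge $e=uw$ satisfies $x^{-1}(e)>\max\{x^{-1}(u),x^{-1}(w)\}$. The cost of $x$ is $\nu(x)=\sum_{e=uw\in E}\big(2x^{-1}(e)-x^{-1}(u)-x^{-1}(w)\big)$, and $\nu^*(G)$ is the maximum of $\nu(x)$ over all c-sequences for $G$. The friendship graph $F_n$ is the wedge of $n$ triangles sharing exactly one common vertex (so it has $2n+1$ vertices and $3n$ edges). *)

(* Defs.v *)
From mathcomp Require Import all_boot.
Set Implicit Arguments. Unset Strict Implicit. Unset Printing Implicit Defensive.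

Definition simple_graph (T : finType) (e : rel T) : Prop :=
  symmetric e /\ irreflexive e.

Definition edge_set (T : finType) (e : rel T) : {set {set T}} :=
  [set s : {set T} | [exists u, exists w, e u w && (s == [set u; w])]].

Definition Edge (T : finType) (e : rel T) := {s : {set T} | s \in edge_set e}.

Definition Elt (T : finType) (e : rel T) := (T + Edge e)%type.

Definition ell (T : finType) (e : rel T) : nat := #|{: Elt e}|.

(* A construction sequence is a bijection x : {1..ell} -> V ⊔ E; we record
   it through its inverse p = x^{-1}, an (injective, hence bijective) map
   V ⊔ E -> 'I_ell, with 1-based position (p y).+1. *)
Definition pos (T : finType) (e : rel T) (p : {ffun Elt e -> 'I_(ell e)})
  (y : Elt e) : nat := (p y).+1.

Definition is_cseq (T : finType) (e : rel T) (p : {ffun Elt e -> 'I_(ell e)}) : bool :=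
  injectiveb p &&
  [forall s : Edge e, forall u : T,
     (u \in val s) ==> (pos p (inl u) < pos p (inr s))].

(* cost nu(x) = sum over edges e = uw of (2 x^{-1}(e) - x^{-1}(u) - x^{-1}(w))
   = sum over edges s, sum over endpoints u of s, of (pos s - pos u)
   (each term is positive for a c-sequence, so truncated subtraction is exact). *)
Definition cost (T : finType) (e : rel T) (p : {ffun Elt e -> 'I_(ell e)}) : nat :=
  \sum_(s : Edge e) \sum_(u in val s) (pos p (inr s) - pos p (inl u)).

Definition nu_star (T : finType) (e : rel T) : nat :=
  \max_(p : {ffun Elt e -> 'I_(ell e)} | is_cseq p) cost p.

(* Friendship graph F_n on vertices 'I_(2n+1): center 0, triangles
   {0, 2i+1, 2i+2} for i < n. *)
Definition friendship_rel (n : nat) : rel 'I_(2 * n + 1) :=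
  fun u v => (u != v) &&
    [|| val u == 0, val v == 0 | (val u).-1./2 == (val v).-1./2].
Arguments friendship_rel n : clear implicits.

Lemma friendship_simple (n : nat) : simple_graph (friendship_rel n).
Proof.
split.
- move=> u v; rewrite /friendship_rel eq_sym; congr (_ && _).
  by case: (val u == 0); case: (val v == 0); rewrite //= eq_sym.
- by move=> u; rewrite /friendship_rel eqxx.
Qed.

(* Main.v *)
From mathcomp Require Import all_boot zify.
Require Import Defs.
Set Warnings "-notation-overridden".

Lemma sorted_uniq_sum (s : seq nat) : sorted geq s -> uniq s ->
  size s ^ 2 <= 2 * sumn s + size s.
Proof.
elim: s => [|m r IH] //= Hs /andP[mr ur].
have Hr : sorted geq r := path_sorted Hs.
have Hall : all (geq m) r.
  by apply: (order_path_min (leT:=geq)) => // a b c /= h1 h2; exact: leq_trans h2 h1.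
have sz : size r <= m.
  rewrite -(size_iota 0 m); apply: uniq_leq_size => // x xr.
  have := allP Hall x xr; rewrite mem_iota /= add0n ltn_neqAle => ->; rewrite andbT.
  by apply/eqP => xm; rewrite -xm xr in mr.
have := IH Hr ur; lia.
Qed.

Lemma uniq_sum (s : seq nat) : uniq s -> size s ^ 2 <= 2 * sumn s + size s.
Proof.
move=> us; have p : perm_eq (sort geq s) s by rewrite perm_sort.
rewrite -(perm_size p) -(perm_sumn p); apply: sorted_uniq_sum.
  by apply: sort_sorted => a b; exact: leq_total.
by rewrite (perm_uniq p).
Qed.

Lemma inj_sum (A : finType) (f : A -> nat) : injective f ->
  #|A| ^ 2 <= 2 * \sum_(a : A) f a + #|A|.
Proof.
move=> fi; have := @uniq_sum _ (etrans (map_inj_uniq fi (enum A)) (enum_uniq A)).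
by rewrite size_map -cardE sumnE big_map big_enum.
Qed.
Lemma deg_card (T : finType) (e : rel T) : symmetric e -> irreflexive e ->
  forall u, #|[set s : Edge e | u \in val s]| = #|[set w | e u w]|.
Proof.
move=> esym eirr u.
have -> : #|[set s : Edge e | u \in val s]| = #|[set S in edge_set e | u \in S]|.
  rewrite -(card_imset _ val_inj); apply: eq_card => S; rewrite [in RHS]inE.
  apply/imsetP/andP => [[s]|[SE uS]]; first by rewrite inE => us ->; split => //; exact: valP.
  by exists (Sub S SE); rewrite ?inE SubK.
have -> : [set S in edge_set e | u \in S] = [set [set u; w] | w in [set w | e u w]].
  apply/setP => S; rewrite inE; apply/andP/imsetP => [[]|[w]].
    rewrite inE => /existsP[a /existsP[b /andP[eab /eqP ->]]].
    rewrite !inE => /orP[]/eqP ->.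
      by exists b; rewrite ?inE.
    by exists a; rewrite ?inE 1?esym // setUC.
  rewrite inE => euw ->; split; last by rewrite !inE eqxx.
  by rewrite inE; apply/existsP; exists u; apply/existsP; exists w; rewrite euw eqxx.
apply: card_in_imset => w1 w2; rewrite !inE => e1 e2 h.
have : w1 \in [set u; w2] by rewrite -h !inE eqxx orbT.
rewrite !inE => /orP[/eqP h1|/eqP //].
by rewrite h1 eirr in e1.
Qed.

Lemma c0P n : 0 < 2 * n + 1. Proof. by rewrite addn1. Qed.
Definition c0 n : 'I_(2 * n + 1) := Ordinal (c0P n).

Definition deg n (u : 'I_(2 * n + 1)) := #|[set s : Edge (friendship_rel n) | u \in val s]|.

Lemma deg_c0 n : deg n (c0 n) = 2 * n.
Proof.
have [esym eirr] := friendship_simple n.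
rewrite /deg deg_card //.
have -> : [set w | friendship_rel n (c0 n) w] = [set~ c0 n].
  by apply/setP => w; rewrite !inE /friendship_rel /= andbT eq_sym.
rewrite cardsC1 card_ord; lia.
Qed.

Lemma pvP n k : 0 < k -> k < 2 * n + 1 -> 2 * ((k.-1) %/ 2) + (1 - (k.-1) %% 2) + 1 < 2 * n + 1.
Proof. lia. Qed.

Lemma deg_other n u : u != c0 n -> deg n u = 2.
Proof.
have [esym eirr] := friendship_simple n.
move=> uc; have u0 : 0 < nat_of_ord u.
  by rewrite lt0n; apply: contra uc => /eqP h; apply/eqP/val_inj.
set v : 'I_(2 * n + 1) := Ordinal (@pvP n (nat_of_ord u) u0 (ltn_ord u)).
rewrite /deg deg_card //.
have -> : [set w | friendship_rel n u w] = [set c0 n; v].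
  apply/setP => w; rewrite !inE /friendship_rel -!val_eqE /= -!divn2.
  have ha : nat_of_ord u < 2 * n + 1 := ltn_ord u; have hb : nat_of_ord w < 2 * n + 1 := ltn_ord w.
  apply/idP/idP.
    case/andP => /eqP h1 /or3P[/eqP h2|/eqP h2|/eqP h2]; apply/orP; lia.
  case/orP => /eqP h; apply/andP; split; try (apply/eqP; lia); apply/or3P; lia.
rewrite cards2 -val_eqE /=; lia.
Qed.

Lemma card2 n (s : Edge (friendship_rel n)) : #|val s| = 2.
Proof.
have := valP s; rewrite inE => /existsP[a /existsP[b /andP[eab /eqP ->]]].
by rewrite cards2; move: eab; rewrite /friendship_rel => /andP[-> _].
Qed.

Lemma dc_vert n (F : 'I_(2 * n + 1) -> nat) :
  \sum_(s : Edge (friendship_rel n)) \sum_(u in val s) F u =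
  2 * n * F (c0 n) + 2 * \sum_(u | u != c0 n) F u.
Proof.
rewrite (exchange_big_dep predT) //=.
rewrite (bigD1 (c0 n)) //=; congr (_ + _).
  rewrite (eq_bigl (fun s => s \in [set s : Edge _ | c0 n \in val s])) ?sum_nat_const.
    by rewrite -/(deg n (c0 n)) deg_c0.
  by move=> s; rewrite inE.
rewrite big_distrr /=; apply: eq_bigr => u uc.
rewrite (eq_bigl (fun s => s \in [set s : Edge _ | u \in val s])) ?sum_nat_const.
  by rewrite -/(deg n u) deg_other.
by move=> s; rewrite inE.
Qed.

Lemma dc_edge n (G : Edge (friendship_rel n) -> nat) :
  \sum_(s : Edge (friendship_rel n)) \sum_(u in val s) G s = 2 * \sum_s G s.
Proof.
rewrite big_distrr /=; apply: eq_bigr => s _.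
by rewrite sum_nat_const card2.
Qed.

Lemma card_edge n : #|{: Edge (friendship_rel n)}| = 3 * n.
Proof.
have := @dc_vert n (fun _ => 1); rewrite dc_edge.
have -> : \sum_(u | u != c0 n) 1 = 2 * n.
  rewrite sum1_card cardC1 card_ord; lia.
rewrite sum1_card => h.
change (2 * #|{: Edge (friendship_rel n)}| = 2 * n * 1 + 2 * (2 * n)) in h.
lia.
Qed.

Lemma ell_eq n : ell (friendship_rel n) = 5 * n + 1.
Proof. rewrite /ell card_sum card_ord card_edge; lia. Qed.

Lemma gauss m : 2 * \sum_(i < m) i.+1 = m * (m + 1).
Proof. elim: m => [|m IH]; first by rewrite big_ord0. rewrite big_ord_recr /= mulnDr IH; lia. Qed.

Lemma cost_eq n (p : {ffun Elt (friendship_rel n) -> 'I_(ell (friendship_rel n))}) :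
  is_cseq p ->
  cost p + 2 * n * pos p (inl (c0 n)) + 2 * \sum_(u | u != c0 n) pos p (inl u)
  = 2 * \sum_(s : Edge (friendship_rel n)) pos p (inr s).
Proof.
move=> /andP[_ /forallP H].
have key (s : Edge (friendship_rel n)) u : u \in val s -> pos p (inl u) < pos p (inr s).
  by move: (H s) => /forallP /(_ u) /implyP; apply.
have : cost p + \sum_(s : Edge (friendship_rel n)) \sum_(u in val s) pos p (inl u)
     = \sum_(s : Edge (friendship_rel n)) \sum_(u in val s) pos p (inr s).
  rewrite /cost -big_split; apply: eq_bigr => s _; rewrite -big_split.
  by apply: eq_bigr => u us /=; rewrite subnK // ltnW // key.
rewrite dc_edge (@dc_vert n (fun u => pos p (inl u))) /=; rewrite -addnA; exact.
Qed.

Lemma tot_eq n (p : {ffun Elt (friendship_rel n) -> 'I_(ell (friendship_rel n))}) :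
  is_cseq p ->
  2 * (\sum_(u : 'I_(2 * n + 1)) pos p (inl u) + \sum_(s : Edge (friendship_rel n)) pos p (inr s))
  = ell (friendship_rel n) * (ell (friendship_rel n) + 1).
Proof.
move=> /andP[/injectiveP pinj _].
have -> : \sum_(u : 'I_(2 * n + 1)) pos p (inl u) + \sum_(s : Edge (friendship_rel n)) pos p (inr s)
  = \sum_(y : Elt (friendship_rel n)) pos p y by rewrite big_sumType.
rewrite -gauss; congr (2 * _).
have pb : bijective p by apply: inj_card_bij => //; rewrite card_ord.
by rewrite (reindex p) //; apply: onW_bij.
Qed.

Lemma sumV n (p : {ffun Elt (friendship_rel n) -> 'I_(ell (friendship_rel n))}) :
  \sum_(u : 'I_(2 * n + 1)) pos p (inl u)
  = pos p (inl (c0 n)) + \sum_(u | u != c0 n) pos p (inl u).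
Proof. by rewrite (bigD1 (c0 n)). Qed.

Lemma sumV_low n (p : {ffun Elt (friendship_rel n) -> 'I_(ell (friendship_rel n))}) :
  is_cseq p -> (2 * n + 1) * (2 * n + 2) <= 2 * \sum_(u : 'I_(2 * n + 1)) pos p (inl u).
Proof.
move=> /andP[/injectiveP pinj _].
have fi : injective (fun u : 'I_(2 * n + 1) => val (p (inl u))).
  by move=> a b /val_inj /pinj [].
have := @inj_sum _ _ fi; rewrite card_ord.
have -> : \sum_(u : 'I_(2 * n + 1)) pos p (inl u) = \sum_(u : 'I_(2 * n + 1)) val (p (inl u)) + (2 * n + 1).
  by rewrite /pos; under eq_bigr do rewrite -addn1; rewrite big_split /= sum1_card card_ord.
move=> h; set S := (X in _ <= 2 * (X + _)); have h' : (2 * n + 1) ^ 2 <= 2 * S + (2 * n + 1) := h. lia.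
Qed.

Lemma upper n (p : {ffun Elt (friendship_rel n) -> 'I_(ell (friendship_rel n))}) :
  1 <= n -> is_cseq p -> cost p <= 17 * n ^ 2 + n.
Proof.
move=> n1 cs.
have ce := @cost_eq n p cs; have te := @tot_eq n p cs; have vl := @sumV_low n p cs.
rewrite sumV in te vl; rewrite ell_eq in te.
have c1 : 1 <= pos p (inl (c0 n)) by [].
have : n <= n * pos p (inl (c0 n)) by rewrite leq_pmulr.
move: ce te vl c1.
move: (cost p) (pos p (inl (c0 n))) (\sum_(u | u != c0 n) pos p (inl u)) (\sum_(s : Edge (friendship_rel n)) pos p (inr s)).
move=> *; nia.
Qed.

Definition fpos n (y : Elt (friendship_rel n)) : nat :=
  match y with
  | inl u => nat_of_ord u
  | inr s => 2 * n + 1 + nat_of_ord (enum_rank s)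
  end.

Lemma fpos_lt n y : @fpos n y < ell (friendship_rel n).
Proof.
rewrite /ell card_sum card_ord.
case: y => [u|s] /=; first by have := ltn_ord u; lia.
have := ltn_ord (enum_rank s); rewrite ltn_add2l. done.
Qed.

Definition pgood n : {ffun Elt (friendship_rel n) -> 'I_(ell (friendship_rel n))} :=
  [ffun y => Ordinal (@fpos_lt n y)].

Lemma pgood_cseq n : is_cseq (pgood n).
Proof.
apply/andP; split.
  apply/injectiveP => y1 y2; rewrite !ffunE => /(congr1 val) /=.
  case: y1 => [u1|s1]; case: y2 => [u2|s2] /=.
  - by move=> h; congr inl; apply: val_inj.
  - by have := ltn_ord u1; lia.
  - by have := ltn_ord u2; lia.
  - by move=> h; congr inr; apply: enum_rank_inj; apply: val_inj => /=; lia.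
apply/forallP => s; apply/forallP => u; apply/implyP => _.
by rewrite /pos !ffunE /=; have := ltn_ord u; lia.
Qed.

Lemma lower n : 1 <= n -> 17 * n ^ 2 + n <= cost (pgood n).
Proof.
move=> n1.
have cs := pgood_cseq n.
have ce := @cost_eq n _ cs; have te := @tot_eq n _ cs.
rewrite sumV in te; rewrite ell_eq in te.
have c1 : pos (pgood n) (inl (c0 n)) = 1 by rewrite /pos ffunE.
have hV : 2 * \sum_(u : 'I_(2 * n + 1)) pos (pgood n) (inl u) = (2 * n + 1) * (2 * n + 2).
  have -> : \sum_(u : 'I_(2 * n + 1)) pos (pgood n) (inl u) = \sum_(i < 2 * n + 1) i.+1.
    by apply: eq_bigr => u _; rewrite /pos ffunE.
  rewrite gauss; lia.
rewrite sumV c1 in hV; rewrite c1 in ce te.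
move: ce te hV.
move: (cost (pgood n)) (\sum_(u | u != c0 n) pos (pgood n) (inl u)) (\sum_(s : Edge (friendship_rel n)) pos (pgood n) (inr s)).
move=> *; nia.
Qed.

Theorem theorem15 (n : nat) : 1 <= n ->
  nu_star (friendship_rel n) = 17 * n ^ 2 + n.
Proof.
move=> n1; apply/eqP; rewrite eqn_leq; apply/andP; split.
  by apply/bigmax_leqP => p cs; apply: upper.
apply: leq_trans (@lower n n1) _.
exact: (@leq_bigmax_cond _ (fun p => is_cseq p) (fun p => cost p) (pgood n) (pgood_cseq n)).
Qed.
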